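(* Let $\Omega$ be a finite set and let $f_1,\ldots,f_n\in\mathbb{R}^{\Omega}$ be gambles. Let $$\mathcal M=\{p\in\mathbb{R}^{\Omega}: p\cdot f_i\ge 0 \text{ for } i=1,\ldots,n,\ p\cdot 1_\Omega=1\}$$ be a nonempty credal set (a nonempty, closed, convex set of probability mass vectors). Let $E\in\mathcal M$, let $I=\{i: E\cdot f_i=0\}$, and for $i\in I$ let $f'_i=f_i-\frac{f_i\cdot 1_\Omega}{|\Omega|}1_\Omega$ (so that $f_i-f'_i$ is constant and $f'_i\cdot 1_\Omega=0$). For $\underline{\alpha}=(\alpha_i)_{i\in I}$ with $\alpha_i\ge 0$ and $\beta\in\mathbb{R}$ put $h(\underline{\alpha},\beta)=\sum_{i\in I}\alpha_i f'_i+\beta 1_\Omega$. Let $P$ be a linear prevision (probability mass vector) on $\Omega$. Then $$\max_{(\underline{\alpha},\beta)}\frac{|E\cdot h(\underline{\alpha},\beta)-P\cdot h(\underline{\alpha},\beta)|}{\|h(\underline{\alpha},\beta)\|}=\max_{\underline{\alpha}}\frac{|E\cdot h(\underline{\alpha},0)-P\cdot h(\underline{\alpha},0)|}{\|h(\underline{\alpha},0)\|},$$ where the maxima range over those parameters for which the denominator is nonzero.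
   Context: $f\cdot g=\sum_{x\in\Omega}f(x)g(x)$ is the standard inner product on $\mathbb{R}^{\Omega}$, $\|f\|=\sqrt{f\cdot f}$ the Euclidean norm, and $1_\Omega$ the constant vector $1$. A linear prevision is identified with a probability mass vector $P$ and acts on gambles by $P(f)=P\cdot f$. *)

(* Defs.v *)
From mathcomp Require Import all_boot all_order all_algebra.
Set Implicit Arguments. Unset Strict Implicit. Unset Printing Implicit Defensive.
Import Order.TTheory GRing.Theory Num.Theory.
Local Open Scope ring_scope.

Section Defs.
Variables (R : rcfType) (T : finType).

Definition dot (f g : T -> R) : R := \sum_(x : T) f x * g x.
Definition norm (f : T -> R) : R := Num.sqrt (dot f f).
Definition one : T -> R := fun _ => 1.
Definition is_pmf (p : T -> R) : Prop := (forall x, 0 <= p x) /\ dot p one = 1.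
Definition in_credal (n : nat) (f : 'I_n -> T -> R) (p : T -> R) : Prop :=
  (forall i, 0 <= dot p (f i)) /\ dot p one = 1.
Definition zero_set (n : nat) (f : 'I_n -> T -> R) (E : T -> R) : {set 'I_n} :=
  [set i | dot E (f i) == 0].
Definition centered (g : T -> R) : T -> R :=
  fun x => g x - dot g one / #|T|%:R.
Definition hfun (n : nat) (I : {set 'I_n}) (f : 'I_n -> T -> R)
  (a : 'I_n -> R) (b : R) : T -> R :=
  fun x => \sum_(i in I) a i * centered (f i) x + b.
Definition dev_ratio (E P h : T -> R) : R := `|dot E h - dot P h| / norm h.

End Defs.

Definition greatest {R : rcfType} (S : R -> Prop) (m : R) : Prop :=
  S m /\ forall r, S r -> r <= m.

(* Main.v *)
Require Import Defs.
From mathcomp Require Import all_boot all_order all_algebra.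
From mathcomp Require Import ring lra.
From Stdlib Require Import IndefiniteDescription.
Set Implicit Arguments. Unset Strict Implicit. Unset Printing Implicit Defensive.
Import Order.TTheory GRing.Theory Num.Theory.
Local Open Scope ring_scope.

Section Dot.
Variables (R : rcfType) (T : finType).
Implicit Types f g h : T -> R.

Lemma dot_eq f f' g g' : f =1 f' -> g =1 g' -> dot f g = dot f' g'.
Proof. by move=> ef eg; apply: eq_bigr => x _; rewrite ef eg. Qed.

Lemma dotC f g : dot f g = dot g f.
Proof. by apply: eq_bigr => x _; rewrite mulrC. Qed.

Lemma dot_ge0 f : 0 <= dot f f.
Proof. by apply: sumr_ge0 => x _; rewrite -expr2 sqr_ge0. Qed.

Lemma dot_eq0 f : dot f f = 0 -> forall x, f x = 0.
Proof.
move=> H x; have := psumr_eq0P (P := xpredT) (F := fun x => f x * f x).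
move=> /(_ (fun x _ => ltac:(rewrite -expr2 sqr_ge0 //)) H x isT) /eqP.
by rewrite mulf_eq0 orbb => /eqP.
Qed.

Lemma dot_comb f g h s : dot (fun x => f x + s * g x) h = dot f h + s * dot g h.
Proof. rewrite /dot mulr_sumr -big_split; apply: eq_bigr => x _ /=; ring. Qed.

Lemma dot_combr f g h s : dot h (fun x => f x + s * g x) = dot h f + s * dot h g.
Proof. by rewrite dotC dot_comb (dotC f) (dotC g). Qed.

Lemma dot_sq f g s : dot (fun x => f x + s * g x) (fun x => f x + s * g x)
  = dot f f + 2 * s * dot f g + s ^+ 2 * dot g g.
Proof. rewrite /dot !mulr_sumr -!big_split; apply: eq_bigr => x _ /=; ring. Qed.

Lemma dot0r h : dot (fun _ => 0) h = 0.
Proof. by apply: big1 => x _; rewrite mul0r. Qed.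

Lemma dot0 f h : (forall x, f x = 0) -> dot f h = 0.
Proof. by move=> e; rewrite (@dot_eq f (fun _ => 0) h h) // dot0r. Qed.

Lemma CS2 f g : dot f g ^+ 2 <= dot f f * dot g g.
Proof.
case: (eqVneq (dot g g) 0) => hg.
  by rewrite (dotC f) (dot0 _ (dot_eq0 hg)) hg expr0n mulr0.
have yp : 0 < dot g g by rewrite lt_def hg dot_ge0.
have := dot_ge0 (fun x => f x + (- (dot f g / dot g g)) * g x).
rewrite dot_sq.
have -> : dot f f + 2 * - (dot f g / dot g g) * dot f g + (- (dot f g / dot g g)) ^+ 2 * dot g g
   = (dot f f * dot g g - dot f g ^+ 2) / dot g g by field.
by rewrite pmulr_lge0 ?invr_gt0 // subr_ge0.
Qed.

Lemma CS f g : `|dot f g| <= norm f * norm g.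
Proof.
rewrite /norm -sqrtrM ?dot_ge0 // -sqrtr_sqr; apply: ler_wsqrtr; exact: CS2.
Qed.

Lemma norm_ge0 f : 0 <= norm f.
Proof. exact: sqrtr_ge0. Qed.

End Dot.

Section Cone.
Variables (R : rcfType) (T : finType) (n : nat) (u : 'I_n -> T -> R).

Definition L (X : {set 'I_n}) (c : 'I_n -> R) : T -> R :=
  fun x => \sum_(i in X) c i * u i x.

Lemma dot_L h X c : dot h (L X c) = \sum_(i in X) c i * dot h (u i).
Proof.
rewrite /dot /L.
under eq_bigr do rewrite mulr_sumr.
rewrite exchange_big /=; apply: eq_bigr => i _.
rewrite mulr_sumr; apply: eq_bigr => x _; ring.
Qed.

Lemma L_comb X c1 c2 s x :
  L X (fun i => c1 i + s * c2 i) x = L X c1 x + s * L X c2 x.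
Proof.
rewrite /L mulr_sumr -big_split; apply: eq_bigr => i _ /=; ring.
Qed.

Lemma L_sub (X Y : {set 'I_n}) c : Y \subset X -> (forall i, i \in X -> i \notin Y -> c i = 0) ->
  forall x, L X c x = L Y c x.
Proof.
move=> sYX h0 x; rewrite /L [LHS]big_mkcond [RHS]big_mkcond /=.
apply: eq_bigr => i _.
case: (boolP (i \in Y)) => iY.
  by rewrite (subsetP sYX i iY).
by case: ifP => // iX; rewrite h0 // mul0r.
Qed.

Lemma L_set0 c x : L set0 c x = 0.
Proof. by rewrite /L big_set0. Qed.

Lemma proj_ex (X : {set 'I_n}) (v : T -> R) :
  exists c, forall j, j \in X -> dot (fun x => v x - L X c x) (u j) = 0.
Proof.
move: {2}#|X| (erefl #|X|) => k; elim: k X v => [|k IH] X v hk.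
  by exists (fun _ => 0) => j; rewrite (cards0_eq hk) inE.
have [j jX] : exists j, j \in X by apply/card_gt0P; rewrite hk.
pose X' := X :\ j.
have hk' : #|X'| = k by move: hk; rewrite (cardsD1 j X) jX => -[].
have [c hc] := IH X' v hk'.
have [c' hc'] := IH X' (u j) hk'.
pose r := fun x => v x - L X' c x.
pose w := fun x => u j x - L X' c' x.
have LX : forall e x, L X e x = e j * u j x + L X' e x.
  by move=> e x; rewrite /L (big_setD1 j jX).
have uj : forall x, u j x = w x + 1 * L X' c' x by move=> x; rewrite /w; ring.
have rL : forall e, dot r (L X' e) = 0.
  move=> e; rewrite dot_L big1 // => i iX'; by rewrite hc // mulr0.
have wL : forall e, dot w (L X' e) = 0.
  move=> e; rewrite dot_L big1 // => i iX'; by rewrite hc' // mulr0.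
have inX' : forall i, i \in X -> i != j -> i \in X'.
  by move=> i iX ij; rewrite !inE ij iX.
case: (eqVneq (dot w w) 0) => hw.
  have w0 := dot_eq0 hw.
  exists (fun i => if i == j then 0 else c i) => i iX.
  have eL : forall x, v x - L X (fun i => if i == j then 0 else c i) x = r x.
    move=> x; rewrite LX eqxx mul0r add0r /r; congr (_ - _).
    apply: eq_bigr => l; rewrite !inE => /andP[/negbTE -> _] //.
  rewrite (@dot_eq _ _ _ r _ (u i)) //.
  case: (eqVneq i j) => [->|ij]; last by apply: hc; exact: inX'.
  rewrite (dot_eq (f' := r) (g' := fun x => w x + 1 * L X' c' x)) //.
  by rewrite dot_combr rL (dotC r w) (dot0 _ w0) mulr0 addr0.
pose lam := dot r w / dot w w.
exists (fun i => if i == j then lam else c i + (- lam) * c' i) => i iX.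
have eL : forall x, v x - L X (fun i => if i == j then lam else c i + (- lam) * c' i) x
    = r x + (- lam) * w x.
  move=> x; rewrite LX eqxx.
  rewrite (_ : L X' _ x = L X' (fun i => c i + (- lam) * c' i) x); last first.
    apply: eq_bigr => l; rewrite !inE => /andP[/negbTE -> _] //.
  rewrite L_comb /r /w; ring.
rewrite (@dot_eq _ _ _ (fun x => r x + (- lam) * w x) _ (u i)) // dot_comb.
case: (eqVneq i j) => [->|ij]; last first.
  have iX' := inX' i iX ij.
  by rewrite hc // (hc' i iX') mulr0 addr0.
rewrite (@dot_eq _ _ r r (u j) (fun x => w x + 1 * L X' c' x)) //.
rewrite (@dot_eq _ _ w w (u j) (fun x => w x + 1 * L X' c' x)) //.
rewrite !dot_combr rL wL /lam; field.
by rewrite hw.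
Qed.

Definition beta (X : {set 'I_n}) (v : T -> R) : 'I_n -> R :=
  proj1_sig (constructive_indefinite_description _ (proj_ex X v)).

Lemma betaP (X : {set 'I_n}) v j : j \in X -> dot (fun x => v x - L X (beta X v) x) (u j) = 0.
Proof. rewrite /beta; case: constructive_indefinite_description => c hc /=; exact: hc. Qed.

Lemma beta_orth (X : {set 'I_n}) v e : dot (fun x => v x - L X (beta X v) x) (L X e) = 0.
Proof. rewrite dot_L big1 // => i iX; by rewrite betaP // mulr0. Qed.

End Cone.

Section Min.
Variable (R : rcfType).
Lemma ex_min_seq (X : eqType) (F : X -> R) (s : seq X) x0 :
  x0 \in s -> exists2 y, y \in s & forall z, z \in s -> F y <= F z.
Proof.
elim: s x0 => // x s IH x0 _.
case: s IH => [|x1 s] IH.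
  by exists x; rewrite ?mem_head // => z; rewrite inE => /eqP->.
have [y ys hy] := IH x1 (mem_head _ _).
case: (leP (F x) (F y)) => hxy.
  exists x; first exact: mem_head.
  by move=> z; rewrite inE => /orP[/eqP->//|/hy]; exact: le_trans.
exists y; first by rewrite inE ys orbT.
by move=> z; rewrite inE => /orP[/eqP->|/hy//]; exact: ltW.
Qed.

Lemma ex_argmin (X : finType) (P : pred X) (F : X -> R) x0 :
  P x0 -> exists y, P y /\ forall z, P z -> F y <= F z.
Proof.
move=> Px0; have [y] := @ex_min_seq X F (enum P) x0 ltac:(by rewrite mem_enum).
rewrite mem_enum => Py hy; exists y; split=> // z Pz; apply: hy; by rewrite mem_enum.
Qed.
End Min.

Section Descent.
Variables (R : rcfType) (T : finType) (n : nat) (u : 'I_n -> T -> R)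
  (I : {set 'I_n}) (v : T -> R).

Definition dist (g : T -> R) := dot (fun x => v x - g x) (fun x => v x - g x).
Definition feasible (S : {set 'I_n}) :=
  (S \subset I) && [forall i in S, 0 <= beta u S v i].
Definition supp (a : 'I_n -> R) := [set i in I | a i != 0].
Definition nonneg (a : 'I_n -> R) := forall i, i \in I -> 0 <= a i.
Definition good a := exists S, feasible S /\ dist (L u S (beta u S v)) <= dist (L u I a).

Lemma dist_eq g g' : g =1 g' -> dist g = dist g'.
Proof. by move=> e; apply: dot_eq => x; rewrite e. Qed.

Lemma step a : nonneg a ->
  (forall a', (#|supp a'| < #|supp a|)%N -> nonneg a' -> good a') -> good a.
Proof.
move=> ha IH.
pose S := supp a. pose b := beta u S v. pose r := fun x => v x - L u S b x.
have SI : S \subset I by apply/subsetP => i; rewrite inE => /andP[].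
have gS : forall x, L u I a x = L u S a x.
  apply: L_sub => // i iI; rewrite inE iI /= negbK => /eqP //.
have key : forall c s, dist (fun x => L u S b x + s * L u S c x)
    = dot r r + s ^+ 2 * dot (L u S c) (L u S c).
  move=> c s; rewrite /dist (@dot_eq _ _ _ (fun x => r x + (-s) * L u S c x) _
      (fun x => r x + (-s) * L u S c x)); try by move=> x; rewrite /r; ring.
  rewrite dot_sq beta_orth sqrrN; ring.
pose D := dot (L u S (fun i => a i + (-1) * b i)) (L u S (fun i => a i + (-1) * b i)).
have hg : dist (L u I a) = dot r r + 1 ^+ 2 * D.
  rewrite -key; apply: dist_eq => x; rewrite gS L_comb; ring.
have Dge0 : 0 <= D by exact: dot_ge0.
case: (boolP [forall i in S, 0 <= b i]) => hb.
  exists S; split; first by rewrite /feasible SI hb.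
  by rewrite hg expr1n mul1r lerDl.
have /forall_inPn [j jS hj] := hb.
have apos : forall i, i \in S -> 0 < a i.
  move=> i; rewrite inE => /andP[iI ai]; rewrite lt_def ai ha //.
have Pj : (j \in S) && (b j < 0) by rewrite jS /= ltNge.
have [k [/andP[kS kneg] kmin]] := @ex_argmin _ _
   (fun i => (i \in S) && (b i < 0)) (fun i => a i / (a i - b i)) j Pj.
have ak := apos k kS.
have den : 0 < a k - b k by rewrite subr_gt0 (lt_trans kneg ak).
pose t := a k / (a k - b k).
have t0 : 0 <= t by rewrite divr_ge0 // ltW.
have t1 : t < 1 by rewrite ltr_pdivrMr // mul1r ltrDl oppr_gt0.
have tk : t * (a k - b k) = a k by rewrite /t divfK // gt_eqF.
pose a' := fun i => if i \in S then a i + t * (b i - a i) else 0.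
have ha' : nonneg a'.
  move=> i iI; rewrite /a'; case: ifP => // iS.
  have ai := ltW (apos i iS).
  case: (leP 0 (b i)) => bi.
    rewrite (_ : a i + t * (b i - a i) = (1 - t) * a i + t * b i); last by ring.
    by rewrite addr_ge0 // mulr_ge0 // subr_ge0 ltW.
  have := kmin i; rewrite /= iS bi => /(_ isT).
  rewrite ler_pdivlMr ?subr_gt0 ?(lt_le_trans bi ai) // => h.
  rewrite (_ : a i + t * (b i - a i) = a i - t * (a i - b i)); last by ring.
  by rewrite subr_ge0.
have a'k : a' k = 0.
  rewrite /a' kS (_ : a k + t * (b k - a k) = a k - t * (a k - b k)); last by ring.
  by rewrite tk subrr.
have sub : supp a' \subset S :\ k.
  apply/subsetP => i; rewrite !inE => /andP[iI].
  case: (eqVneq i k) => [->|ik]; first by rewrite a'k eqxx.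
  rewrite /= /a'; case: ifP => [h _|_]; [by move: h; rewrite /S /supp inE | by rewrite eqxx].
have lt : (#|supp a'| < #|supp a|)%N.
  apply: (leq_ltn_trans (subset_leq_card sub)).
  by rewrite [X in (_ < X)%N](cardsD1 k) kS.
have [S' [fS' hS']] := IH a' lt ha'.
exists S'; split => //; apply: (le_trans hS').
have ga' : forall x, L u I a' x = L u S b x + (1 - t) * L u S (fun i => a i + (-1) * b i) x.
  move=> x; rewrite (@L_sub _ _ _ u I S) //; last first.
    by move=> i _ /negbTE; rewrite /a' => ->.
  rewrite /L mulr_sumr -big_split; apply: eq_bigr => i iS; rewrite /a' iS /=; ring.
rewrite (dist_eq ga') key hg lerD2l ler_wpM2r // expr1n exprn_ile1 // ?subr_ge0 ?ltW //.
by rewrite ltrBlDr ltrDl /t divr_gt0.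
Qed.

Lemma descent k a : (#|supp a| <= k)%N -> nonneg a -> good a.
Proof.
elim: k a => [|k IH] a hk ha; apply: step => // a' lt ha'.
  by move: lt; rewrite leqn0 in hk; rewrite (eqP hk).
by apply: IH => //; rewrite -ltnS (leq_trans lt hk).
Qed.

Lemma proj_min : exists a0, nonneg a0 /\
  forall a, nonneg a -> dist (L u I a0) <= dist (L u I a).
Proof.
have f0 : feasible set0.
  by rewrite /feasible sub0set; apply/forall_inP => i; rewrite inE.
have [S [fS Smin]] := @ex_argmin _ _ feasible (fun S => dist (L u S (beta u S v))) set0 f0.
move: (fS) => /andP[SI /forall_inP hS].
exists (fun i => if i \in S then beta u S v i else 0); split.
  by move=> i _; case: ifP => // iS; exact: hS.
move=> a ha.
have [S' [fS' h]] := descent (leqnn _) ha.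
have e : dist (L u I (fun i => if i \in S then beta u S v i else 0))
   = dist (L u S (beta u S v)).
  apply: dist_eq => x.
  rewrite (@L_sub _ _ _ u I S) //; last by move=> i _ /negbTE ->.
  by apply: eq_bigr => i iS; rewrite iS.
rewrite e; exact: le_trans (Smin S' fS') h.
Qed.

End Descent.

Section Var.
Variables (R : rcfType) (T : finType) (n : nat) (u : 'I_n -> T -> R)
  (I : {set 'I_n}) (v : T -> R).

Lemma quad (x y : R) : 0 <= y ->
  (forall s : R, 0 < s -> s <= 1 -> 2 * s * x <= s ^+ 2 * y) -> x <= 0.
Proof.
move=> y0 h; rewrite leNgt; apply/negP => x0.
case: (leP y x) => yx.
  have H := h 1 ltr01 (lexx _).
  by rewrite expr1n mul1r mulr1 in H; lra.
have yp : 0 < y by exact: lt_trans x0 yx.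
pose s := x / y.
have s0 : 0 < s by rewrite divr_gt0.
have s1 : s <= 1 by rewrite ler_pdivrMr // mul1r ltW.
have := h s s0 s1.
have -> : s ^+ 2 * y = s * x by rewrite /s; field; rewrite gt_eqF.
have sx : 0 < s * x by rewrite mulr_gt0.
move=> H; lra.
Qed.

Lemma proj_var : exists a0, nonneg I a0 /\
  (forall a, nonneg I a -> dot (fun x => v x - L u I a0 x) (L u I a) <= 0) /\
  dot (fun x => v x - L u I a0 x) (L u I a0) = 0.
Proof.
have [a0 [h0 hmin]] := proj_min u I v.
exists a0; split => //.
pose r := fun x => v x - L u I a0 x.
have hd : dist v (L u I a0) = dot r r by [].
have A : forall a, nonneg I a -> dot r (L u I a) <= 0.
  move=> a ha; apply: (quad (dot_ge0 (L u I a))) => s s0 s1.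
  have hc : nonneg I (fun i => a0 i + s * a i).
    by move=> i iI; rewrite addr_ge0 ?h0 // mulr_ge0 ?ha // ltW.
  have := hmin _ hc.
  rewrite /dist (@dot_eq _ _ (fun x => v x - L u I (fun i => a0 i + s * a i) x)
     (fun x => r x + (-s) * L u I a x) _ (fun x => r x + (-s) * L u I a x));
     try by move=> x; rewrite L_comb /r; ring.
  rewrite -/(dist v (L u I a0)) hd dot_sq sqrrN -addrA lerDl => H.
  rewrite -subr_ge0.
  have -> : s ^+ 2 * dot (L u I a) (L u I a) - 2 * s * dot r (L u I a)
     = 2 * - s * dot r (L u I a) + s ^+ 2 * dot (L u I a) (L u I a) by ring.
  exact: H.
have B : - dot r (L u I a0) <= 0.
  apply: (quad (dot_ge0 (L u I a0))) => s s0 s1.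
  have hc : nonneg I (fun i => a0 i + (- s) * a0 i).
    move=> i iI; rewrite (_ : a0 i + - s * a0 i = (1 - s) * a0 i); last by ring.
    by rewrite mulr_ge0 ?subr_ge0 ?h0.
  have := hmin _ hc.
  rewrite /dist (@dot_eq _ _ (fun x => v x - L u I (fun i => a0 i + (- s) * a0 i) x)
     (fun x => r x + s * L u I a0 x) _ (fun x => r x + s * L u I a0 x));
     try by move=> x; rewrite L_comb /r; ring.
  rewrite -/(dist v (L u I a0)) hd dot_sq -addrA lerDl => H.
  rewrite -subr_ge0.
  have -> : s ^+ 2 * dot (L u I a0) (L u I a0) - 2 * s * - dot r (L u I a0)
     = 2 * s * dot r (L u I a0) + s ^+ 2 * dot (L u I a0) (L u I a0) by ring.
  exact: H.
split; first exact: A.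
apply/eqP; rewrite eq_le A //; by rewrite oppr_le0 in B.
Qed.

End Var.

Lemma proj_bound (R : rcfType) (T : finType) (n : nat) (u : 'I_n -> T -> R)
  (I : {set 'I_n}) (v : T -> R) :
  exists a0, nonneg I a0 /\
   (forall a, nonneg I a -> dot v (L u I a) <= norm (L u I a0) * norm (L u I a)) /\
   dot v (L u I a0) = norm (L u I a0) ^+ 2.
Proof.
have [a0 [h0 [V1 V2]]] := proj_var u I v.
pose r := fun x => v x - L u I a0 x.
have ev : forall w, dot v w = dot r w + 1 * dot (L u I a0) w.
  move=> w; rewrite -dot_comb; apply: dot_eq => // x; rewrite /r; ring.
exists a0; split => //; split.
  move=> a ha; rewrite ev mul1r.
  apply: le_trans (_ : 0 + dot (L u I a0) (L u I a) <= _).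
    by rewrite lerD2r; exact: V1.
  by rewrite add0r; apply: le_trans (CS _ _); exact: ler_norm.
by rewrite ev V2 add0r mul1r /norm sqr_sqrtr // dot_ge0.
Qed.

Lemma bound_key (R : rcfType) (x n1 n2 m N : R) :
  x <= n1 * N -> - x <= n2 * N -> 0 < N -> n1 <= m -> n2 <= m ->
  `|x| / N <= m.
Proof.
move=> h1 h2 N0 l1 l2; rewrite ler_pdivrMr // ler_norml; apply/andP; split.
  rewrite lerNl; apply: le_trans h2 _; by rewrite ler_wpM2r // ltW.
apply: le_trans h1 _; by rewrite ler_wpM2r // ltW.
Qed.

Theorem corollary4 (R : rcfType) (T : finType) (n : nat)
  (f : 'I_n -> T -> R) (E P : T -> R)
  (HM : forall p, in_credal f p -> is_pmf p)
  (HE : in_credal f E) (HP : is_pmf P)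
  (Hne : exists a : 'I_n -> R,
      (forall i, i \in zero_set f E -> 0 <= a i) /\
      norm (hfun (zero_set f E) f a 0) != 0) :
  exists m : R,
    greatest (fun r => exists (a : 'I_n -> R) (b : R),
                (forall i, i \in zero_set f E -> 0 <= a i) /\
                norm (hfun (zero_set f E) f a b) != 0 /\
                r = dev_ratio E P (hfun (zero_set f E) f a b)) m /\
    greatest (fun r => exists a : 'I_n -> R,
                (forall i, i \in zero_set f E -> 0 <= a i) /\
                norm (hfun (zero_set f E) f a 0) != 0 /\
                r = dev_ratio E P (hfun (zero_set f E) f a 0)) m.
Proof.
set I := zero_set f E.
pose u := fun i => centered (f i).
pose d := fun x => E x + (-1) * P x.
have HE1 : dot E (@Defs.one R T) = 1 := HE.2.
have HP1 : dot P (@Defs.one R T) = 1 := HP.2.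
have cT : (#|T| != 0)%N.
  apply/negP => /eqP h0; move: HE1.
  rewrite /dot big_pred0 => [/eqP|x]; first by rewrite eq_sym oner_eq0.
  by have := card0_eq h0 x; rewrite !inE.
have cen : forall g, dot (@Defs.one R T) (centered g) = 0.
  move=> g; rewrite /dot /centered /Defs.one.
  under eq_bigr do rewrite mul1r.
  rewrite sumrB sumr_const (_ : #|xpredT| = #|T|) //.
  rewrite (_ : forall c : R, c *+ #|T| = c * #|T|%:R); last by move=> c; rewrite mulr_natr.
  rewrite divfK ?pnatr_eq0 //; apply/eqP; rewrite subr_eq0; apply/eqP.
  by apply: eq_bigr => x _; rewrite mulr1.
have Lone : forall a, dot (@Defs.one R T) (L u I a) = 0.
  by move=> a; rewrite dot_L big1 // => i _; rewrite cen mulr0.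
have hL : forall a b x, hfun I f a b x = L u I a x + b * @Defs.one R T x.
  by move=> a b x; rewrite /hfun /Defs.one mulr1.
have hL0 : forall a, norm (hfun I f a 0) = norm (L u I a).
  by move=> a; rewrite /norm; congr Num.sqrt; apply: dot_eq => x; rewrite hL mul0r addr0.
have num : forall a b, dot E (hfun I f a b) - dot P (hfun I f a b) = dot d (L u I a).
  move=> a b; rewrite (@dot_eq _ _ E E _ _ (frefl _) (hL a b)) (@dot_eq _ _ P P _ _ (frefl _) (hL a b)).
  rewrite !dot_combr HE1 HP1 /d dot_comb; ring.
have nle : forall a b, norm (L u I a) <= norm (hfun I f a b).
  move=> a b; rewrite /norm; apply: ler_wsqrtr.
  rewrite (@dot_eq _ _ (hfun I f a b) (fun x => L u I a x + b * @Defs.one R T x) (hfun I f a b) (fun x => L u I a x + b * @Defs.one R T x) (hL a b) (hL a b)).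
  rewrite dot_sq (dotC (L u I a) (@Defs.one R T)) Lone mulr0 addr0 lerDl mulr_ge0 ?sqr_ge0 ?dot_ge0 //.
have ratio : forall a b, dev_ratio E P (hfun I f a b) = `|dot d (L u I a)| / norm (hfun I f a b).
  by move=> a b; rewrite /dev_ratio num.
have [a1 [h1 [B1 E1]]] := proj_bound u I d.
have [a2 [h2 [B2 E2]]] := proj_bound u I (fun x => - d x).
have negd : forall w, dot (fun x => - d x) w = - dot d w.
  move=> w; rewrite (@dot_eq _ _ _ (fun x => 0 + (-1) * d x) w w) ?dot_comb ?dot0r //.
    by rewrite add0r mulN1r.
  by move=> x; rewrite add0r mulN1r.
pose n1 := norm (L u I a1). pose n2 := norm (L u I a2).
have key : forall m, n1 <= m -> n2 <= m -> forall a, nonneg I a -> norm (L u I a) != 0 ->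
    `|dot d (L u I a)| / norm (L u I a) <= m.
  move=> m l1 l2 a ha hn.
  apply: (bound_key (B1 a ha) _ _ l1 l2).
    by rewrite -negd; exact: B2.
  by rewrite lt_def hn norm_ge0.
pose S0 := (fun r => exists a : 'I_n -> R,
                (forall i, i \in I -> 0 <= a i) /\
                norm (hfun I f a 0) != 0 /\
                r = dev_ratio E P (hfun I f a 0)).
have [m [Sm Mm]] : exists m, greatest S0 m.
  have n1ge0 : 0 <= n1 by exact: norm_ge0.
  case: (leP n2 n1) => h12.
    case: (eqVneq n1 0) => hn1.
      have [a0 [ha0 hn0]] := Hne.
      exists (dev_ratio E P (hfun I f a0 0)); split; first by exists a0.
      move=> r [a [ha [hn ->]]].
      apply: (@le_trans _ _ 0).
        rewrite ratio hL0; apply: key => //; [by rewrite hn1 | by rewrite -hn1 | by rewrite -hL0].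
      by rewrite /dev_ratio divr_ge0 ?norm_ge0.
    exists n1; split.
      exists a1; split => //; split; first by rewrite hL0.
      rewrite ratio hL0 E1 ger0_norm ?sqr_ge0 // expr2 mulfK //.
    move=> r [a [ha [hn ->]]].
    by rewrite ratio hL0; apply: key => //; rewrite -hL0.
  have hn2 : n2 != 0 by rewrite gt_eqF // (le_lt_trans n1ge0 h12).
  exists n2; split.
    exists a2; split => //; split; first by rewrite hL0.
    rewrite ratio hL0 -normrN -negd E2 ger0_norm ?sqr_ge0 // expr2 mulfK //.
  move=> r [a [ha [hn ->]]].
  by rewrite ratio hL0; apply: key => //; [exact: ltW | rewrite -hL0].
have m0 : 0 <= m.
  by case: Sm => a [_ [_ ->]]; rewrite /dev_ratio divr_ge0 ?norm_ge0.
exists m; split; last by split.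
split.
  by case: Sm => a [ha [hn e]]; exists a, 0.
move=> r [a [b [ha [hn ->]]]].
rewrite ratio.
case: (eqVneq (norm (L u I a)) 0) => hLa.
  have : `|dot d (L u I a)| <= 0.
    by apply: le_trans (CS _ _) _; rewrite hLa mulr0.
  rewrite normr_le0 => /eqP ->; by rewrite normr0 mul0r.
apply: le_trans (Mm _ _); last first.
  by exists a; split => //; split; [rewrite hL0 | reflexivity].
rewrite ratio hL0 ler_wpM2l // lef_pV2 ?posrE ?nle //.
  by rewrite lt_def hn norm_ge0.
by rewrite lt_def hLa norm_ge0.
Qed.
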